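(* Let $\omega=-\frac12+i\frac{\sqrt3}{2}$. Let $T$ be a triangle with vertices $A=a_1+a_2\omega$, $B=b_1+b_2\omega$ and $C=0$, where $a_1,a_2,b_1,b_2$ are nonnegative integers, and suppose $T$ is equable. Then each of the side lengths $|AC|$, $|BC|$, $|AB|$ of $T$ is of the form $\sqrt3\,n$ for some positive integer $n$.
   Context: A triangle is a non-degenerate triangle in the plane $\mathbb{C}\cong\mathbb{R}^2$. A triangle is called equable if its perimeter equals its area. *)

(* Defs.v *)
(* points of the plane C ~ R^2 are pairs of reals. *)
From Stdlib Require Import Reals Lra.
Open Scope R_scope.

Definition pt := (R * R)%type.

(* omega = -1/2 + i sqrt3/2 ; the point x + y*omega *)
Definition eis (x y : nat) : pt :=
  (INR x - INR y / 2, INR y * sqrt 3 / 2).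

Definition edist (P Q : pt) : R :=
  sqrt ((fst P - fst Q)^2 + (snd P - snd Q)^2).

Definition tri_area (P Q S : pt) : R :=
  Rabs ((fst Q - fst P) * (snd S - snd P) - (fst S - fst P) * (snd Q - snd P)) / 2.

Definition perimeter (P Q S : pt) : R := edist P Q + edist Q S + edist S P.

Definition nondegenerate (P Q S : pt) : Prop := tri_area P Q S <> 0.

Definition equable (P Q S : pt) : Prop :=
  nondegenerate P Q S /\ perimeter P Q S = tri_area P Q S.

(* Main.v *)
Require Import Defs.
From Stdlib Require Import Reals Lra Lia Psatz ZArith Znumtheory.
Open Scope R_scope.

Lemma div_sq (p q N : Z) : q <> 0%Z -> (p*p = N*(q*q))%Z -> (q | p)%Z.
Proof.
  intros Hq E.
  set (g := Z.gcd p q).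
  assert (Hg : g <> 0%Z) by (intro H; apply Z.gcd_eq_0 in H; lia).
  destruct (Z.gcd_divide_l p q) as [p' Hp].
  destruct (Z.gcd_divide_r p q) as [q' Hq'].
  fold g in Hp, Hq'.
  assert (G := Z.gcd_div_gcd p q g Hg eq_refl).
  replace (p / g)%Z with p' in G by (rewrite Hp at 1; rewrite Z.div_mul; auto).
  replace (q / g)%Z with q' in G by (rewrite Hq' at 1; rewrite Z.div_mul; auto).
  assert (E' : (p'*p' = N*(q'*q'))%Z).
  { rewrite Hp, Hq' in E.
    apply (Z.mul_cancel_r _ _ (g*g)); [nia|]. nia. }
  assert (D : (q' | p' * p')%Z) by (exists (N*q')%Z; lia).
  apply Z.gauss in D; [|rewrite Z.gcd_comm; exact G].
  rewrite Hp, Hq'. apply Z.mul_divide_mono_r. exact D.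
Qed.

Lemma sq_rat (w : R) (p q Z0 : Z) : 0 <= w -> q <> 0%Z -> w * IZR q = IZR p ->
  w^2 = 3 * IZR Z0 -> exists k, (0<=k)%Z /\ w = 3 * IZR k.
Proof.
  intros Hw Hq E S.
  assert (Hq' : IZR q <> 0) by (apply not_0_IZR; exact Hq).
  assert (E2 : (p*p = (3*Z0)*(q*q))%Z).
  { apply eq_IZR. rewrite !mult_IZR. rewrite <- E.
    replace (IZR 3 * IZR Z0) with (w^2) by (rewrite S; reflexivity). ring. }
  destruct (div_sq p q _ Hq E2) as [k Hk].
  assert (Wk : w = IZR k).
  { apply (Rmult_eq_reg_r (IZR q)); [|exact Hq']. rewrite E, Hk, mult_IZR. ring. }
  assert (K0 : (0 <= k)%Z) by (apply le_IZR; lra).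
  assert (Kk : (k*k = 3*Z0)%Z).
  { apply eq_IZR. rewrite !mult_IZR. rewrite <- Wk.
    replace (IZR 3 * IZR Z0) with (w^2) by (rewrite S; reflexivity). ring. }
  assert (D : (3 | k*k)%Z) by (exists Z0; lia).
  destruct (prime_mult 3 prime_3 k k D) as [[j Hj]|[j Hj]];
  exists j; split; try lia; rewrite Wk, Hj, mult_IZR; ring.
Qed.

Lemma rat_w (u v w : R) (X Y Z0 Rr : Z) : 0<=u -> 0<=v -> 0<w ->
  u^2 = 3*IZR X -> v^2 = 3*IZR Y -> w^2 = 3*IZR Z0 -> 4*(u+v+w) = IZR Rr ->
  exists p q : Z, q <> 0%Z /\ w * IZR q = IZR p.
Proof.
  intros Hu Hv Hw HX HY HZ HR.
  set (s' := (Rr*Rr + 48*(Z0-X-Y))%Z).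
  assert (Es : IZR s' = 32*(u*v + (u+v+w)*w)).
  { unfold s'. rewrite plus_IZR, !mult_IZR, !minus_IZR, <- HR.
    replace (IZR Z0) with (w^2/3) by (rewrite HZ; field). replace (IZR X) with (u^2/3) by (rewrite HX; field).
    replace (IZR Y) with (v^2/3) by (rewrite HY; field). field. }
  exists (s'*s' + 192*Rr*Rr*Z0 - 9216*X*Y)%Z, (16*Rr*s')%Z.
  split.
  - intro H. apply (f_equal IZR) in H. rewrite !mult_IZR, Es, <- HR in H.
    assert (0 < u*v + (u+v+w)*w) by (assert (0<=u*v) by nra; nra).
    assert (0 < (u+v+w)*(u*v + (u+v+w)*w)) by (apply Rmult_lt_0_compat; lra). nra.
  - rewrite minus_IZR, plus_IZR, !mult_IZR, Es, <- HR.
    replace (IZR Z0) with (w^2/3) by (rewrite HZ; field). replace (IZR X) with (u^2/3) by (rewrite HX; field).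
    replace (IZR Y) with (v^2/3) by (rewrite HY; field). field.
Qed.

Lemma s3sq : sqrt 3 * sqrt 3 = 3.
Proof. apply sqrt_sqrt; lra. Qed.
Lemma s3pos : 0 < sqrt 3.
Proof. apply sqrt_lt_R0; lra. Qed.

Definition nz (x1 y1 x2 y2 : nat) : Z :=
  let d1 := (Z.of_nat x1 - Z.of_nat x2)%Z in let d2 := (Z.of_nat y1 - Z.of_nat y2)%Z in
  (d1*d1 - d1*d2 + d2*d2)%Z.

Lemma normZ (x1 y1 x2 y2 : nat) :
  (fst (eis x1 y1) - fst (eis x2 y2))^2 + (snd (eis x1 y1) - snd (eis x2 y2))^2
  = IZR (nz x1 y1 x2 y2).
Proof.
  unfold eis, nz; simpl fst; simpl snd. rewrite !INR_IZR_INZ.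
  rewrite plus_IZR, !minus_IZR, !mult_IZR, !minus_IZR.
  generalize s3sq. generalize (sqrt 3). intros s H.
  generalize (IZR (Z.of_nat x1)) (IZR (Z.of_nat x2)) (IZR (Z.of_nat y1)) (IZR (Z.of_nat y2)).
  intros p1 p2 q1 q2.
  transitivity ((p1 - p2 - (q1-q2)/2)^2 + (s*s)*(q1-q2)^2/4); [field|].
  rewrite H. field.
Qed.

Lemma edist_eq0 (P Q : pt) : edist P Q = 0 -> fst P = fst Q /\ snd P = snd Q.
Proof.
  unfold edist. intro H.
  pose proof (pow2_ge_0 (fst P - fst Q)). pose proof (pow2_ge_0 (snd P - snd Q)).
  apply sqrt_eq_0 in H; [|lra].
  assert (h1 : (fst P - fst Q)^2 = 0) by lra. assert (h2 : (snd P - snd Q)^2 = 0) by lra.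
  split; nra.
Qed.

Lemma edist_sq (P Q : pt) : edist P Q ^2 = (fst P - fst Q)^2 + (snd P - snd Q)^2.
Proof. unfold edist. rewrite pow2_sqrt; [reflexivity|]. pose proof (pow2_ge_0 (fst P - fst Q)). pose proof (pow2_ge_0 (snd P - snd Q)). lra. Qed.

Lemma edist_ge0 (P Q : pt) : 0 <= edist P Q.
Proof. apply sqrt_pos. Qed.

Lemma finish (d : R) (X : Z) : 0 < d -> d^2 = IZR X ->
  (exists p q : Z, q <> 0%Z /\ (sqrt 3 * d) * IZR q = IZR p) ->
  exists n : nat, (0 < n)%nat /\ d = sqrt 3 * INR n.
Proof.
  intros Hd HX [p [q [Hq E]]].
  assert (S : (sqrt 3 * d)^2 = 3 * IZR X).
  { rewrite <- HX. replace ((sqrt 3 * d)^2) with ((sqrt 3 * sqrt 3) * d^2) by ring.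
    rewrite s3sq. ring. }
  assert (H0 : 0 <= sqrt 3 * d) by (pose proof s3pos; nra).
  destruct (sq_rat _ p q X H0 Hq E S) as [k [Hk W]].
  assert (Dk : d = sqrt 3 * IZR k).
  { apply (Rmult_eq_reg_l (sqrt 3)); [|pose proof s3pos; lra].
    rewrite W, <- Rmult_assoc, s3sq. reflexivity. }
  exists (Z.to_nat k). split.
  - assert (0 < IZR k).
    { pose proof s3pos. destruct (Rle_or_lt (IZR k) 0); [|assumption]. nra. }
    apply lt_IZR in H. lia.
  - rewrite INR_IZR_INZ, Z2Nat.id by exact Hk. exact Dk.
Qed.

Theorem mainTheorem2 (a1 a2 b1 b2 : nat) :
  let A := eis a1 a2 in
  let B := eis b1 b2 in
  let C := (0, 0) : pt in
  equable A B C ->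
  (exists n : nat, (0 < n)%nat /\ edist A C = sqrt 3 * INR n) /\
  (exists n : nat, (0 < n)%nat /\ edist B C = sqrt 3 * INR n) /\
  (exists n : nat, (0 < n)%nat /\ edist A B = sqrt 3 * INR n).
Proof.
  intros A B C [ND EQ].
  unfold perimeter in EQ.
  assert (CA : edist C A = edist A C) by (unfold edist; f_equal; ring).
  rewrite CA in EQ.
  assert (ZC : C = eis 0 0) by (unfold C, eis; simpl; f_equal; field).
  assert (HAC : edist A C ^2 = IZR (nz a1 a2 0 0))
    by (rewrite edist_sq, ZC; apply normZ).
  assert (HBC : edist B C ^2 = IZR (nz b1 b2 0 0))
    by (rewrite edist_sq, ZC; apply normZ).
  assert (HAB : edist A B ^2 = IZR (nz a1 a2 b1 b2))
    by (rewrite edist_sq; apply normZ).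
  set (D := (Z.of_nat a1 * Z.of_nat b2 - Z.of_nat a2 * Z.of_nat b1)%Z).
  assert (AR : tri_area A B C = sqrt 3 * Rabs (IZR D) / 4).
  { unfold tri_area, A, B, C, eis, D; simpl fst; simpl snd.
    rewrite !INR_IZR_INZ, minus_IZR, !mult_IZR.
    match goal with |- Rabs ?e / 2 = _ => replace e with (sqrt 3 / 2 * (IZR (Z.of_nat a1) * IZR (Z.of_nat b2) -
       IZR (Z.of_nat a2) * IZR (Z.of_nat b1))) by field end.
    rewrite Rabs_mult, (Rabs_pos_eq (sqrt 3 / 2)) by (pose proof s3pos; lra). field. }
  assert (pos : forall P Q, (fst P = fst Q /\ snd P = snd Q -> tri_area A B C = 0) -> 0 < edist P Q).
  { intros P Q Hi. destruct (edist_ge0 P Q) as [h|h]; [exact h|].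
    exfalso. apply ND. apply Hi. apply edist_eq0. auto. }
  assert (pAC : 0 < edist A C).
  { apply pos. intros [h1 h2]. unfold tri_area. rewrite h1, h2.
    match goal with |- Rabs ?e / 2 = 0 => replace e with 0 by ring end. rewrite Rabs_R0. field. }
  assert (pBC : 0 < edist B C).
  { apply pos. intros [h1 h2]. unfold tri_area. rewrite h1, h2.
    match goal with |- Rabs ?e / 2 = 0 => replace e with 0 by ring end. rewrite Rabs_R0. field. }
  assert (pAB : 0 < edist A B).
  { apply pos. intros [h1 h2]. unfold tri_area. rewrite h1, h2.
    match goal with |- Rabs ?e / 2 = 0 => replace e with 0 by ring end. rewrite Rabs_R0. field. }
  pose proof s3pos as S3.
  assert (SUM : 4 * (sqrt 3 * edist A C + sqrt 3 * edist B C + sqrt 3 * edist A B) = IZR (3 * Z.abs D)).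
  { rewrite mult_IZR, abs_IZR.
    replace (4 * (sqrt 3 * edist A C + sqrt 3 * edist B C + sqrt 3 * edist A B))
      with (4 * sqrt 3 * (edist A B + edist B C + edist A C)) by ring.
    rewrite EQ, AR. transitivity ((sqrt 3 * sqrt 3) * Rabs (IZR D)); [field | rewrite s3sq; reflexivity]. }
  assert (sq : forall d X, d^2 = IZR X -> (sqrt 3 * d)^2 = 3 * IZR X).
  { intros d X h. rewrite <- h. replace ((sqrt 3 * d)^2) with ((sqrt 3 * sqrt 3) * d^2) by ring.
    rewrite s3sq. ring. }
  split; [|split].
  - apply (finish _ _ pAC HAC).
    apply (rat_w (sqrt 3 * edist B C) (sqrt 3 * edist A B) _ (nz b1 b2 0 0) (nz a1 a2 b1 b2) (nz a1 a2 0 0) (3 * Z.abs D));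
      try (apply sq; eassumption); try nra.
  - apply (finish _ _ pBC HBC).
    apply (rat_w (sqrt 3 * edist A C) (sqrt 3 * edist A B) _ (nz a1 a2 0 0) (nz a1 a2 b1 b2) (nz b1 b2 0 0) (3 * Z.abs D));
      try (apply sq; eassumption); try nra.
  - apply (finish _ _ pAB HAB).
    apply (rat_w (sqrt 3 * edist A C) (sqrt 3 * edist B C) _ (nz a1 a2 0 0) (nz b1 b2 0 0) (nz a1 a2 b1 b2) (3 * Z.abs D));
      try (apply sq; eassumption); try nra.
Qed.
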